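(* Let $A$ be a circular $m\times n$ matrix and $\alpha$ a positive integer. Let $\Gamma$ be a circuit in $F(A)$ with $s$ row arcs and winding number $p$, such that $p$ does not divide $t(\Gamma,\alpha\mathbf{1})$ and $2\le p\le t(\Gamma,\alpha\mathbf{1})-1$. Let $r:=\alpha s-p\lfloor \alpha s/p\rfloor$. Then the $\Gamma$-inequality for $Q^*(A,\alpha\mathbf{1})$ (i.e. with $b=\alpha\mathbf{1}$) has the form $$r\sum_{j\notin\otimes(\Gamma)}x_j+(r+1)\sum_{j\in\otimes(\Gamma)}x_j\ge r\left\lceil\frac{\alpha s}{p}\right\rceil.$$ Moreover, if $\alpha=1$ and $\otimes(\Gamma)\neq\emptyset$, this inequality is the row family inequality induced by $F:=\{i\in[m]: a_i \text{ is a row arc of }\Gamma\}$.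
   Context: Notation: $[n]=\{1,\dots,n\}$ with addition mod $n$ (index $0$ identified with $n$); for $a,c\in[n]$ with $t\ge0$ minimal such that $a+t\equiv c\pmod n$, $[a,c)_n=\{a,\dots,a+t-1\}$ (mod $n$). An $m\times n$ $\{0,1\}$-matrix $A=(a_{ij})$ is circular if for each row $i$ there are $\ell_i\in[n]$ and an integer $2\le k_i\le n-1$ with row $i$ the incidence vector of $[\ell_i,\ell_i+k_i)_n$. $Q(A,b)=\{x\ge0:Ax\ge b\}$, $Q^*(A,b)=\operatorname{conv}(Q(A,b)\cap\mathbb{Z}^n)$. $D(A)$: node set $[n]$; forward row arcs $a_i=(\ell_i-1,\ell_i+k_i-1)$, forward short arcs $(j-1,j)$, reverse row arcs $\bar a_i=(\ell_i+k_i-1,\ell_i-1)$, reverse short arcs $(j,j-1)$, with lengths $k_i,1,-k_i,-1$. $F(A)$ is $D(A)$ with all reverse row arcs removed. A circuit is a simple directed circuit; winding number $p(\Gamma)$: $p(\Gamma)n=$ sum of arc lengths. A forward row arc $a_i$ jumps over $j$ iff $j\in[\ell_i,\ell_i+k_i)_n$; $(j-1,j)$ jumps over $j$ only; a reverse arc jumps over $j$ iff its antiparallel forward arc does; $p^-(\Gamma,j)$ = number of reverse arcs of $\Gamma$ jumping over $j$. $\otimes(\Gamma)=\{j\in[n]:(j,j-1)\in E(\Gamma)\}$. For a circuit $\Gamma$ and $b\in\mathbb{Z}_+^m$: $t(\Gamma,b)=\sum_{i:a_i\in E(\Gamma)}b_i-\sum_{i:\bar a_i\in E(\Gamma)}b_i$;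 for $p(\Gamma)\ne0$, $\beta=\lfloor t(\Gamma,b)/p(\Gamma)\rfloor$, $\rho=t(\Gamma,b)-\beta p(\Gamma)$, and the $\Gamma$-inequality is $\sum_{j}[p^-(\Gamma,j)+\rho]x_j\ge\rho(\beta+1)+\sum_{i:\bar a_i\in E(\Gamma)}b_i$. Row family inequalities: for $F\subseteq[m]$ with $s=|F|\ge2$ and integer $1\le p\le s-1$ not dividing $s$, let $r=s-p\lfloor s/p\rfloor$, $I(F,p)=\{j:\sum_{i\in F}a_{ij}\le p\}$, $O(F,p)=\{j:\sum_{i\in F}a_{ij}=p+1\}$; the rfi induced by $(F,p)$ is $(r+1)\sum_{j\in O(F,p)}x_j+r\sum_{j\in I(F,p)}x_j\ge r\lceil s/p\rceil$. The rfi induced by $F$ is the one induced by $(F,p^* )$ with $p^*=\max_j\sum_{i\in F}a_{ij}-1$. *)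

(* Defs.v *)
From mathcomp Require Import all_boot all_order all_algebra.
Set Implicit Arguments. Unset Strict Implicit. Unset Printing Implicit Defensive.
Import Order.TTheory GRing.Theory Num.Theory.

(* Convention: [n] = {1,..,n} with n identified with 0, so a node / column
   j in [n] is represented by its residue mod n, i.e. by an element of 'I_n
   (column n <-> 0). *)

Section Circ.
Variables (m n : nat).

Definition floorq (a b : int) : int := Num.floor ((a%:~R / b%:~R)%R : rat).
Definition ceilq (a b : int) : int := Num.ceil ((a%:~R / b%:~R)%R : rat).

(* j \in [l, l+k)_n *)
Definition in_cint (l : 'I_n) (k : nat) (j : 'I_n) : bool :=
  (j + n - l) %% n < k.

Definition circular_with (A : 'M[nat]_(m, n)) (l : 'I_m -> 'I_n)
    (k : 'I_m -> nat) : Prop :=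
  forall i : 'I_m, (2 <= k i <= n.-1)%N /\
    forall j : 'I_n, A i j = nat_of_bool (in_cint (l i) (k i) j).

(* Arcs of D(A):  (inl i, false) = forward row arc a_i,
                  (inl i, true)  = reverse row arc \bar a_i,
                  (inr j, false) = forward short arc (j-1, j),
                  (inr j, true)  = reverse short arc (j, j-1). *)
Definition darc := (('I_m + 'I_n) * bool)%type.

Definition is_rev (e : darc) : bool := e.2.
Definition is_row (e : darc) : bool := if e.1 is inl _ then true else false.

Variables (l : 'I_m -> 'I_n) (k : 'I_m -> nat).

Definition ftl (e : darc) : nat :=
  match e.1 with inl i => (l i + n - 1) %% n | inr j => (j + n - 1) %% n end.
Definition fhd (e : darc) : nat :=
  match e.1 with inl i => (l i + k i + n - 1) %% n | inr j => j %% n end.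
Definition tl (e : darc) : nat := if is_rev e then fhd e else ftl e.
Definition hd (e : darc) : nat := if is_rev e then ftl e else fhd e.

Definition arc_len (e : darc) : int :=
  let L : int := match e.1 with inl i => Posz (k i) | inr _ => 1%R end in
  if is_rev e then (- L)%R else L.

(* simple directed circuit of D(A), given as the cyclic sequence of its arcs *)
Definition D_circuit (c : seq darc) : bool :=
  [&& c != [::], cycle (fun e f => hd e == tl f) c & uniq (map tl c)].

(* circuit of F(A) = D(A) without reverse row arcs *)
Definition F_circuit (c : seq darc) : bool :=
  D_circuit c && all (fun e => ~~ (is_row e && is_rev e)) c.

(* winding number: p(Gamma) * n = sum of darc lengths *)
Definition winding (c : seq darc) : int := ((\sum_(e <- c) arc_len e)%R %/ Posz n)%Z.

Definition jumps (e : darc) (j : 'I_n) : bool :=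
  match e.1 with inl i => in_cint (l i) (k i) j | inr j' => j' == j end.

Definition p_minus (c : seq darc) (j : 'I_n) : nat :=
  count (fun e => is_rev e && jumps e j) c.

Definition otimes (c : seq darc) : {set 'I_n} :=
  [set j : 'I_n | (inr j, true) \in c].

Definition tGb (c : seq darc) (b : 'I_m -> nat) : int :=
  (\sum_(e <- c) match e.1 with
                | inl i => if is_rev e then - Posz (b i) else Posz (b i)
                | inr _ => 0 end)%R.

Definition rev_row_b (c : seq darc) (b : 'I_m -> nat) : int :=
  (\sum_(e <- c) match e.1 with
                | inl i => if is_rev e then Posz (b i) else 0
                | inr _ => 0 end)%R.

Definition gbeta (c : seq darc) (b : 'I_m -> nat) : int :=
  floorq (tGb c b) (winding c).
Definition grho (c : seq darc) (b : 'I_m -> nat) : int :=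
  (tGb c b - gbeta c b * winding c)%R.

(* Gamma-inequality:  sum_j gamma_coef j * x_j >= gamma_rhs *)
Definition gamma_coef (c : seq darc) (b : 'I_m -> nat) (j : 'I_n) : int :=
  (Posz (p_minus c j) + grho c b)%R.
Definition gamma_rhs (c : seq darc) (b : 'I_m -> nat) : int :=
  (grho c b * (gbeta c b + 1) + rev_row_b c b)%R.

Definition row_arcs (c : seq darc) : {set 'I_m} :=
  [set i : 'I_m | (inl i, false) \in c].

End Circ.

Definition const_b (m : nat) (alpha : nat) : 'I_m -> nat := fun _ => alpha.

Section RFI.
Variables (m n : nat) (A : 'M[nat]_(m, n)).

Definition colsum (F : {set 'I_m}) (j : 'I_n) : nat := \sum_(i in F) A i j.

Definition rfi_r (F : {set 'I_m}) (p : nat) : nat :=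
  #|F| - p * (#|F| %/ p).

(* rfi induced by (F,p): sum_j rfi_coef j * x_j >= rfi_rhs *)
Definition rfi_coef (F : {set 'I_m}) (p : nat) (j : 'I_n) : int :=
  if colsum F j <= p then Posz (rfi_r F p)
  else if colsum F j == p.+1 then (Posz (rfi_r F p) + 1)%R else 0%R.
Definition rfi_rhs (F : {set 'I_m}) (p : nat) : int :=
  (Posz (rfi_r F p) * ceilq (Posz #|F|) (Posz p))%R.

Definition rfi_ok (F : {set 'I_m}) (p : nat) : bool :=
  [&& 2 <= #|F|, 1 <= p, p <= #|F| - 1 & ~~ (p %| #|F|)].

Definition pstar (F : {set 'I_m}) : nat := (\max_(j : 'I_n) colsum F j) - 1.
End RFI.

(* Main.v *)
Require Import Defs.
From mathcomp Require Import all_boot all_order all_algebra.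
From mathcomp Require Import zify ring.
Import Order.TTheory GRing.Theory Num.Theory.
Local Open Scope ring_scope.
Set Implicit Arguments. Unset Strict Implicit. Unset Printing Implicit Defensive.

Lemma modn_case (n x : nat) : (x < n + n)%N -> (x %% n = if x < n then x else x - n)%N.
Proof.
move=> h; case: ltnP => h2; first by rewrite modn_small.
have -> : x = (x - n + n)%N by rewrite subnK.
by rewrite modnDr modn_small ?addnK //; rewrite ltn_subLR.
Qed.

Lemma divz_case (n : nat) (x : int) : (0 < n)%N -> - (n:int) <= x -> x < (n:int) + (n:int) ->
  divz x n = (if x < 0 then -1 else if x < (n:int) then 0 else 1).
Proof.
move=> n0 h1 h2.
have nz : (n:int) != 0 by lia.
case: ltP => h3.
  have -> : x = (-1) * (n:int) + (x + n) by lia.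
  rewrite divzMDl // divz_small; first by lia.
  apply/andP; split; lia.
case: ltP => h4.
  rewrite divz_small //; apply/andP; split; lia.
have -> : x = 1 * (n:int) + (x - (n:int)) by lia.
rewrite divzMDl // divz_small; first by lia.
apply/andP; split; lia.
Qed.

Lemma modz_eq (n : nat) (x : int) : (0 < n)%N -> modz x n = x - divz x n * n.
Proof. move=> _; rewrite {2}(divz_eq x n); ring. Qed.

Ltac splitifs :=
  repeat match goal with |- context[if ?b then _ else _] =>
    lazymatch b with context[if _ then _ else _] => fail | _ => case: (boolP b) => ? end end.

Definition jsign m n (l : 'I_m -> 'I_n) (k : 'I_m -> nat) (e : darc m n) (j : 'I_n) : int :=
  if is_rev e then - ((jumps l k e j : nat) : int) else ((jumps l k e j : nat) : int).

Lemma arc_arith m n (l : 'I_m -> 'I_n) (k : 'I_m -> nat) (e : darc m n) (j : 'I_n) :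
  (forall i, 2 <= k i <= n.-1)%N -> ~~ (is_row e && is_rev e) ->
  (Posz (Defs.hd l k e) = modz (Posz (Defs.tl l k e) + arc_len k e) (Posz n)) /\
  (divz (Posz (Defs.tl l k e) + arc_len k e - Posz j) (Posz n) - divz (Posz (Defs.tl l k e) - Posz j) (Posz n))
   = jsign l k e j.
Proof.
move=> hk.
have jn := ltn_ord j.
have n0 : (0 < n)%N by lia.
case: e => [[i|j'] []] //= _; rewrite /Defs.hd /Defs.tl /jsign /jumps /arc_len /ftl /fhd /in_cint /=.
{ have := hk i; have := ltn_ord (l i) => li /andP[k2 kn].
  have -> : (l i + k i + n - 1 = (l i + k i - 1) + n)%N by lia.
  rewrite modnDr !modn_case; try lia.
  rewrite !modz_eq // !divz_case //; try (splitifs; lia). }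
{ have := ltn_ord j' => jn'.
  rewrite -val_eqE /= (modn_small jn') !modn_case; try lia.
  rewrite !modz_eq // !divz_case //; try (splitifs; lia). }
{ have := ltn_ord j' => jn'.
  rewrite -val_eqE /= (modn_small jn') !modn_case; try lia.
  rewrite !modz_eq // !divz_case //; try (splitifs; lia). }
Qed.

Lemma path_map_belast (T : Type) (f g : T -> nat) x s :
  path (fun e e' => f e == g e') x s -> map f (belast x s) = map g s.
Proof.
elim: s x => [|y s IH] x //= /andP[/eqP -> /IH ->] //.
Qed.

Lemma cycle_map (T : Type) (f g : T -> nat) c :
  cycle (fun e e' => f e == g e') c -> map f c = map g (rot 1 c).
Proof.
case: c => [|x s] //= H.
by rewrite rot1_cons -(path_map_belast H) belast_rcons.
Qed.

Lemma sum_cycle (T : eqType) (f g : T -> nat) (G : nat -> int) c :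
  cycle (fun e e' => f e == g e') c ->
  \sum_(e <- c) G (f e) = \sum_(e <- c) G (g e).
Proof.
move=> H; rewrite -(big_map f xpredT G) (cycle_map H) big_map.
by apply: perm_big; rewrite perm_rot.
Qed.

Lemma wind_id m n (l : 'I_m -> 'I_n) (k : 'I_m -> nat) (c : seq (darc m n)) (j : 'I_n) :
  (forall i, 2 <= k i <= n.-1)%N -> F_circuit l k c ->
  winding k c = \sum_(e <- c) jsign l k e j.
Proof.
move=> hk /andP[/and3P[_ cyc _] /allP nrr].
have n0 : (0 < n)%N by case: (n) j => [[]|].
have nz : (n:int) != 0 by lia.
pose q e := divz (Posz (Defs.tl l k e) + arc_len k e) n.
have E1 : forall e, e \in c -> jsign l k e j =
   q e + divz (Posz (Defs.hd l k e) - Posz j) n - divz (Posz (Defs.tl l k e) - Posz j) n.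
  move=> e /nrr ne; have [h1 <-] := @arc_arith _ _ l k e j hk ne.
  rewrite h1 /q -addrA -divzMDl //; congr (divz _ _ - _).
  rewrite modz_eq //; lia.
have E2 : forall e, e \in c -> arc_len k e = q e * n + Posz (Defs.hd l k e) - Posz (Defs.tl l k e).
  move=> e /nrr ne; have [h1 _] := @arc_arith _ _ l k e j hk ne.
  rewrite h1 modz_eq // /q; lia.
rewrite (eq_big_seq _ E1) /winding (eq_big_seq _ E2) !big_split /= !sumrN.
rewrite (sum_cycle (fun x => Posz x) cyc) (sum_cycle (fun x => divz (Posz x - Posz j) n) cyc).
rewrite -mulr_suml addrK addrK mulzK //.
Qed.

Definition rowval m n (f : 'I_m -> nat) (e : darc m n) : nat :=
  match e with (inl i, false) => f i | _ => 0%N end.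

Lemma S1 m n (f : 'I_m -> nat) (c : seq (darc m n)) : uniq c ->
  (\sum_(i | (inl i, false) \in c) f i = \sum_(e <- c) rowval f e)%N.
Proof.
elim: c => [|x c IH] /=.
  by move=> _; rewrite big_nil big_pred0.
move=> /andP[xc uc]; rewrite big_cons -IH //.
case: x xc => [[i0|j0] [|]] xc /=; rewrite ?add0n;
  try by (apply: eq_bigl => i; rewrite in_cons; case: eqP => // H; discriminate H).
rewrite (bigD1 i0) /= ?in_cons ?eqxx //; f_equal.
apply: eq_bigl => i; rewrite in_cons; case: (eqVneq i i0) => [->|ne].
  by rewrite eqxx andbF (negbTE xc).
rewrite andbT; case: eqP => // -[] h.
by rewrite h eqxx in ne.
Qed.

Lemma S3 m n (c : seq (darc m n)) : all (fun e => ~~ (is_row e && is_rev e)) c ->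
  count (@is_row m n) c = \sum_(e <- c) rowval (fun _ => 1%N) e.
Proof.
elim: c => [|x c IH] /=; first by rewrite big_nil.
move=> /andP[hx /IH ->]; rewrite big_cons.
by case: x hx => [[i0|j0] [|]].
Qed.

Lemma inr_eq m n (j0 j : 'I_n) (b b' : bool) :
  ((inr j0, b) == (inr j, b') :> darc m n) = (j0 == j) && (b == b').
Proof. by apply/eqP/andP => [[-> ->]|[/eqP -> /eqP ->]]. Qed.

Lemma S2 m n (A : 'M[nat]_(m, n)) (l : 'I_m -> 'I_n) (k : 'I_m -> nat) (hA : circular_with A l k)
  (c : seq (darc m n)) (j : 'I_n) : all (fun e => ~~ (is_row e && is_rev e)) c ->
  \sum_(e <- c) jsign l k e j = Posz (\sum_(e <- c) rowval (fun i => A i j) e)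
     + Posz (count_mem (inr j, false) c) - Posz (count_mem (inr j, true) c).
Proof.
elim: c => [|x c IH] /=; first by rewrite !big_nil.
move=> /andP[hx /IH IHc]; rewrite !big_cons IHc.
have E : jsign l k x j = Posz (rowval (fun i => A i j) x) + Posz (x == (inr j, false))
    - Posz (x == (inr j, true)).
  case: x hx => [[i0|j0] [|]] //= _; rewrite /jsign /jumps /=.
  - by rewrite (proj2 (hA i0)) subr0 addr0.
  - by rewrite !inr_eq /=; case: (j0 == j).
  - by rewrite !inr_eq /=; case: (j0 == j).
rewrite E !PoszD; ring.
Qed.

Lemma Pm m n (l : 'I_m -> 'I_n) (k : 'I_m -> nat) (c : seq (darc m n)) (j : 'I_n) :
  all (fun e => ~~ (is_row e && is_rev e)) c ->
  p_minus l k c j = count_mem (inr j, true) c.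
Proof.
rewrite /p_minus => /allP H; apply: eq_in_count => x /H.
case: x => [[i0|j0] [|]] //= _; by rewrite /jumps /= inr_eq /= ?andbT ?andbF.
Qed.

Lemma tG m n (c : seq (darc m n)) (alpha : nat) :
  all (fun e => ~~ (is_row e && is_rev e)) c ->
  tGb c (@const_b m alpha) = Posz (alpha * count (@is_row m n) c)%N /\
  rev_row_b c (@const_b m alpha) = 0.
Proof.
rewrite /tGb /rev_row_b.
elim: c => [|x c IH] /=; first by rewrite !big_nil muln0.
move=> /andP[hx /IH [IH1 IH2]]; rewrite !big_cons IH1 IH2.
case: x hx => [[i0|j0] [|]] //= _; rewrite /const_b; split; lia.
Qed.

Lemma uniq_map_inj (T : eqType) (f : T -> nat) (s : seq T) x y :
  uniq (map f s) -> x \in s -> y \in s -> f x = f y -> x = y.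
Proof.
elim: s => [|z s IH] //= /andP[nz us].
rewrite !in_cons => /orP[/eqP->|xs] /orP[/eqP->|ys] //.
- by move=> E; move: nz; rewrite E (map_f f ys).
- by move=> E; move: nz; rewrite -E (map_f f xs).
- exact: IH.
Qed.

Lemma two_short m n (l : 'I_m -> 'I_n) (k : 'I_m -> nat) (c : seq (darc m n)) (j : 'I_n) :
  F_circuit l k c -> (inr j, false) \in c -> (inr j, true) \in c ->
  \sum_(e <- c) arc_len k e = 0.
Proof.
move=> /andP[/and3P[_ cyc un] _] h1 h2.
case: (rot_to h1) => i s' E.
have pr : perm_eq c (rot i c) by rewrite perm_sym perm_rot.
rewrite (perm_big _ pr) E.
have cyc' : cycle (fun e f => Defs.hd l k e == Defs.tl l k f) ((inr j, false) :: s')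
  by rewrite -E rot_cycle.
have un' : uniq (map (Defs.tl l k) ((inr j, false) :: s')) by rewrite -E map_rot rot_uniq.
have h2' : (inr j, true) \in (inr j, false) :: s' by rewrite -E mem_rot.
have inj := uniq_map_inj un'.
case: s' E cyc' un' h2' inj => [|y s''] E cyc' un' h2' inj.
  by move: h2'; rewrite in_cons inr_eq andbF in_nil.
move: cyc' => /= /andP[/eqP hy cyc'].
have yc : y \in (inr j, false) :: y :: s'' by rewrite !in_cons eqxx orbT.
have ye : y = (inr j, true).
  apply: inj => //; rewrite -hy /Defs.hd /Defs.tl /=.
subst y.
case: s'' E cyc' un' h2' inj yc => [|w s3] E cyc' un' h2' inj yc.
  by rewrite !big_cons big_nil /arc_len /= addr0 subrr.
move: cyc' => /= /andP[/eqP hw _].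
have wc : w \in (inr j, false) :: (inr j, true) :: w :: s3 by rewrite !in_cons eqxx !orbT.
have we : w = (inr j, false).
  by apply: inj => //; rewrite in_cons eqxx.
by move: un'; rewrite we /= !in_cons eqxx !orbT /=.

Qed.

Lemma floorq_div (a : int) (b : nat) : (0 < b)%N -> floorq a (Posz b) = divz a (Posz b).
Proof.
move=> b0; rewrite /floorq; apply: Num.Theory.floor_def.
have bq : (0 : rat) < (Posz b)%:~R by rewrite ltr0z; lia.
rewrite ler_pdivlMr // ltr_pdivrMr // -!intrM ler_int ltr_int.
rewrite lez_floor ?ltz_ceil //; lia.
Qed.

Lemma ceilq_floor (a b : int) : b != 0 -> ~~ (b %| a)%Z -> ceilq a b = floorq a b + 1.
Proof.
move=> bz nd; rewrite /ceilq /floorq Num.Theory.ceil_floor.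
case: (boolP (_ \is a Num.int)) => //= hi.
exfalso; move/negP: nd; apply.
have bq : (b%:~R : rat) != 0 by rewrite intr_eq0.
have := Num.Theory.floorK hi => E.
apply/dvdzP; exists (Num.floor (a%:~R / b%:~R : rat)).
apply/(intr_inj (R := rat)); rewrite intrM E mulfVK //.
Qed.
Unset Implicit Arguments.

Theorem theorem6p2 (m n : nat) (A : 'M[nat]_(m, n))
    (l : 'I_m -> 'I_n) (k : 'I_m -> nat) (hA : circular_with A l k)
    (alpha : nat) (halpha : (0 < alpha)%N)
    (c : seq (darc m n)) (hc : F_circuit l k c)
    (s : nat) (hs : s = count (@is_row m n) c)
    (p : int) (hp : winding k c = p)
    (hdiv : ~~ (p %| tGb c (@const_b m alpha))%Z)
    (hp2 : 2 <= p) (hpt : p <= tGb c (@const_b m alpha) - 1) :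
  let r : int := (alpha * s)%N%:Z - p * floorq (alpha * s)%N%:Z p in
  [/\ (forall j : 'I_n, gamma_coef l k c (@const_b m alpha) j =
                        (if j \in otimes c then r + 1 else r)),
      gamma_rhs k c (@const_b m alpha) = r * ceilq (alpha * s)%N%:Z p
    & (alpha = 1%N -> otimes c != set0 ->
       let F := row_arcs c in
       rfi_ok F (pstar A F) /\
       (forall j : 'I_n, rfi_coef A F (pstar A F) j =
                         gamma_coef l k c (@const_b m alpha) j) /\
       rfi_rhs F (pstar A F) = gamma_rhs k c (@const_b m alpha))].
Proof.
move=> r.
have hk : forall i, (2 <= k i <= n.-1)%N by move=> i; exact: (proj1 (hA i)).
have hc' := hc; move: hc' => /andP[/and3P[_ cyc un] /allP nrr0].
have nrr : all (fun e => ~~ (is_row e && is_rev e)) c by apply/allP.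
have uc : uniq c := map_uniq un.
have [ht hrb] := tG alpha nrr; rewrite -hs in ht.
have hrho : grho k c (@const_b m alpha) = r by rewrite /grho /gbeta ht hp /r [_ * p]mulrC.
have hpm : forall j, p_minus l k c j = ((inr j, true) \in c) :> nat.
  by move=> j; rewrite Pm // count_uniq_mem.
have hot : forall j, (j \in otimes c) = ((inr j, true) \in c) by move=> j; rewrite inE.
have P1 : forall j : 'I_n, gamma_coef l k c (@const_b m alpha) j =
                        (if j \in otimes c then r + 1 else r).
  move=> j; rewrite /gamma_coef hrho hpm hot.
  by case: ((inr j, true) \in c) => /=; rewrite ?add0r // addrC.
have pz : p != 0 by lia.
have P2 : gamma_rhs k c (@const_b m alpha) = r * ceilq (alpha * s)%N%:Z p.
  rewrite /gamma_rhs hrho hrb addr0 /gbeta ht hp ceilq_floor //.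
  by rewrite -ht.
split => // a1 hne F.
subst alpha.
have hpn : p = Posz `|p|%N by rewrite gez0_abs //; lia.
set pn := `|p|%N in hpn.
have pn2 : (2 <= pn)%N by lia.
have hF : forall f, (\sum_(i in F) f i = \sum_(e <- c) rowval f e)%N.
  by move=> f; rewrite -S1 //; apply: eq_bigl => i; rewrite inE.
have cardF : #|F| = s by rewrite -sum1_card hF -S3 // hs.
have hcol : forall j, Posz (colsum A F j) + Posz ((inr j,false) \in c) - Posz ((inr j,true) \in c) = p.
  move=> j; rewrite /colsum (hF (fun i => A i j)) -!count_uniq_mem // -(S2 hA j nrr).
  by rewrite -(wind_id j hk hc) hp.
have nb : forall j, ~~ (((inr j,false) \in c) && ((inr j,true) \in c)).
  move=> j; apply/negP => /andP[h1 h2]; have := two_short hc h1 h2.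
  by move=> h0; move: hp2; rewrite -hp /winding h0 div0z.
have colO : forall j, j \in otimes c -> colsum A F j = (pn + 1)%N.
  move=> j; have := hcol j; have := nb j; rewrite hot.
  by case: ((inr j,true) \in c); case: ((inr j,false) \in c) => //=; lia.
have colN : forall j, j \notin otimes c -> (colsum A F j <= pn)%N.
  move=> j; have := hcol j; have := nb j; rewrite hot.
  by case: ((inr j,true) \in c); case: ((inr j,false) \in c) => //=; lia.
have pst : pstar A F = pn.
  case/set0Pn: hne => j0 hj0.
  have mx : (\max_j colsum A F j = pn + 1)%N.
    apply/eqP; rewrite eqn_leq; apply/andP; split.
      apply/bigmax_leqP => j _; case: (boolP (j \in otimes c)) => h.
        by rewrite colO.
      by have := colN j h; lia.
    by rewrite -(colO j0 hj0); exact: leq_bigmax.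
  by rewrite /pstar mx addnK.
have hr : Posz (rfi_r F pn) = r.
  rewrite /rfi_r /r mul1n cardF hpn floorq_div; last by lia.
  rewrite divz_nat subzn //; last by rewrite mulnC leq_trunc_div.
have hok : rfi_ok F (pstar A F).
  rewrite /rfi_ok pst cardF.
  move: hpt hdiv; rewrite ht mul1n hpn dvdzE /= => hpt hdiv.
  apply/and4P; split => //; lia.
split => //; split.
  move=> j; rewrite /rfi_coef pst hr P1.
  case: (boolP (j \in otimes c)) => h.
    by rewrite colO // addn1 ltnn eqxx.
  by rewrite colN.
by rewrite /rfi_rhs pst hr cardF P2 mul1n hpn.
Qed.
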